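(* Assume that every increasing sequence of positive integers $x_1<x_2<x_3<\cdots$ with bounded gaps (i.e. there is a constant $K$ with $x_{n+1}-x_n\le K$ for all $n\ge1$) contains a double 3-term arithmetic progression. Then for every positive integer $r$ and every coloring of $\mathbb{N}$ with $r$ colors, there is a color class $A=\{a_1<a_2<a_3<\cdots\}$ (finite or infinite, listed in increasing order) that contains a double 3-term arithmetic progression, i.e. there are indices $i<j<k$ with $i+k=2j$ and $a_i+a_k=2a_j$. *)

(* Defs.v *)
From mathcomp Require Import all_boot.
Set Implicit Arguments. Unset Strict Implicit. Unset Printing Implicit Defensive.

(* An increasing sequence of positive integers x_0 < x_1 < ... (indexed from 0). *)
Definition pos_increasing (x : nat -> nat) : Prop :=
  0 < x 0 /\ forall n, x n < x n.+1.

Definition bounded_gaps (x : nat -> nat) : Prop :=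
  exists K, forall n, x n.+1 - x n <= K.

Definition seq_has_double_3AP (x : nat -> nat) : Prop :=
  exists i j k, [/\ i < j < k, i + k = 2 * j & x i + x k = 2 * x j].

(* Position (0-based) of a in the increasing enumeration of the set A:
   the number of elements of A smaller than a.  For a \in A,
   a is the (rank A a)-th element of A, i.e. a = a_{rank A a}. *)
Definition rank (A : pred nat) (a : nat) : nat := count A (iota 0 a).

(* Indices are expressed
   via elements a<b<c of A and their positions rank A _ . *)
Definition set_has_double_3AP (A : pred nat) : Prop :=
  exists a b c, [/\ A a, A b, A c & a < b < c] /\
    rank A a + rank A c = 2 * rank A b /\ a + c = 2 * b.

Definition color_class (r : nat) (c : nat -> 'I_r) (col : 'I_r) : pred nat :=
  fun n => (0 < n) && (c n == col).

(* Main.v *)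
Require Import Defs.
From mathcomp Require Import all_boot zify.
From Stdlib Require Import ClassicalEpsilon Classical.
Set Implicit Arguments. Unset Strict Implicit.

Definition DAP (A : pred nat) : Prop :=
  exists a b e, [/\ A a, A b, A e, a < b & b < e] /\ a + e = 2 * b /\
    count A (iota a (b - a)) = count A (iota b (e - b)).

Lemma combine r (Q : nat -> nat -> Prop) :
  (forall v N N', N <= N' -> Q v N -> Q v N') ->
  (forall v, v < r -> exists N, Q v N) -> exists N, forall v, v < r -> Q v N.
Proof.
move=> Hm; elim: r => [|r IH] H; first by exists 0.
have [N1 H1] := IH (fun v hv => H v (ltnW hv)).
have [N2 H2] := H r (ltnSn r).
exists (maxn N1 N2) => v; rewrite ltnS leq_eqVlt => /orP [/eqP->|hv].
  by apply: Hm H2; apply: leq_maxr.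
by apply: Hm (H1 v hv); apply: leq_maxl.
Qed.

Definition upd (f : nat -> nat) L v := fun m => if m == L then v else f m.
Definition Gd r (c : nat -> nat) (f : nat -> nat) L : Prop :=
  forall N, exists n, (forall m, m < N -> c (n + m) < r) /\
                      (forall m, m < L -> c (n + m) = f m).

Lemma step r c f L : Gd r c f L -> exists v, v < r /\ Gd r c (upd f L v) L.+1.
Proof.
move=> HG; apply: NNPP => Hn.
have H1 : forall v, v < r -> exists N, forall n,
   ~ ((forall m, m < N -> c (n + m) < r) /\
      (forall m, m < L.+1 -> c (n + m) = upd f L v m)).
  move=> v hv; apply: NNPP => Hc; apply: Hn; exists v; split => // N.
  apply: NNPP => Hc2; apply: Hc; exists N => n Hw; apply: Hc2; by exists n.
have [N0 HN0] : exists N, forall v, v < r -> forall n,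
   ~ ((forall m, m < N -> c (n + m) < r) /\
      (forall m, m < L.+1 -> c (n + m) = upd f L v m)).
  apply: combine H1.
  move=> v N N' hNN' HQ n [hw hp]; apply: (HQ n); split => // m hm.
  by apply: hw; apply: leq_trans hNN'.
have [n [hw hp]] := HG (maxn N0 L.+1).
have hvr : c (n + L) < r by apply: hw; rewrite leq_max leqnn orbT.
apply: (HN0 _ hvr n); split.
  by move=> m hm; apply: hw; rewrite leq_max hm.
move=> m; rewrite /upd ltnS leq_eqVlt => /orP [/eqP->|hm]; first by rewrite eqxx.
by rewrite (ltn_eqF hm) hp.
Qed.

Definition chooseV r c f L :=
  epsilon (inhabits 0) (fun v => v < r /\ Gd r c (upd f L v) L.+1).
Fixpoint Fseq r c L : nat -> nat :=
  match L with 0 => fun _ => 0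
  | L'.+1 => upd (Fseq r c L') L' (chooseV r c (Fseq r c L') L') end.

Lemma compact r (c : nat -> nat) :
  (forall K, exists n, forall m, m <= K -> c (n + m) < r) ->
  exists c' : nat -> nat, (forall m, c' m < r) /\
    forall N, exists n, forall m, m < N -> c (n + m) = c' m.
Proof.
move=> HK.
have HF : forall L, Gd r c (Fseq r c L) L.
  elim=> [|L IH] /=.
    move=> N; have [n hn] := HK N; exists n; split => // m hm.
    by apply: hn; apply: ltnW.
  by case: (epsilon_spec (inhabits 0) _ (step IH)).
have Hst : forall m L, m < L -> Fseq r c L.+1 m = Fseq r c L m.
  by move=> m L hm /=; rewrite /upd (ltn_eqF hm).
have Hst2 : forall m d, Fseq r c (m.+1 + d) m = Fseq r c m.+1 m.
  move=> m; elim=> [|d IH]; first by rewrite addn0.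
  by rewrite addnS Hst ?IH // ltn_addr.
exists (fun m => Fseq r c m.+1 m); split.
  move=> m /=; rewrite /upd eqxx.
  by case: (epsilon_spec (inhabits 0) _ (step (HF m))).
move=> N; have [n [_ hp]] := HF N N; exists n => m hm.
by rewrite hp // -(subnKC hm) Hst2.
Qed.

Lemma ar1 a b i j : i < j -> a + (j - i) <= b -> a < b. Proof. lia. Qed.
Lemma ar2 a b e : a.+1 + e.+1 = 2 * b.+1 -> a + e = 2 * b. Proof. lia. Qed.
Lemma ar3 i j k : i < j -> j < k -> i + k = 2 * j -> j - i = k - j. Proof. lia. Qed.

Lemma cnt1 (B : pred nat) a b : a < b -> B a ->
  (forall t, a < t -> t < b -> ~~ B t) -> count B (iota a (b - a)) = 1.
Proof.
move=> hab hBa hn; rewrite (_ : b - a = (b - a.+1).+1); last by lia.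
rewrite /= hBa (eq_in_count (a2 := pred0)) ?count_pred0 // => t.
rewrite mem_iota => /andP [ht1 ht2] /=; apply/negbTE; apply: hn => //; lia.
Qed.

Lemma syndetic_case (Hyp : forall x : nat -> nat, pos_increasing x -> bounded_gaps x -> seq_has_double_3AP x)
  (B : pred nat) K : (forall n, exists m, n <= m <= n + K /\ B m) -> DAP B.
Proof.
move=> hS.
have hex : forall m, exists t, (m <= t) && B t.
  by move=> m; have [t [/andP [h1 _] h2]] := hS m; exists t; rewrite h1 h2.
pose nxt m := ex_minn (hex m).
have nxtP : forall m, [/\ m <= nxt m, B (nxt m), nxt m <= m + K &
    forall t, m <= t -> t < nxt m -> ~~ B t].
  move=> m; rewrite /nxt; case: ex_minnP => t /andP [h1 h2] hmin; split => //.
    have [u [/andP [hmu hu] hb]] := hS m.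
    by apply: leq_trans (hmin u _) hu; rewrite hmu hb.
  move=> u hu hut; apply/negP => hb.
  by have := hmin u; rewrite hu hb => /(_ isT); rewrite leqNgt hut.
pose y n := iter n (fun p => nxt p.+1) (nxt 0).
have yS : forall n, y n.+1 = nxt (y n).+1 by [].
have yB : forall n, B (y n).
  by case=> [|n]; [case: (nxtP 0)| rewrite yS; case: (nxtP (y n).+1)].
have ylt : forall n, y n < y n.+1 by move=> n; rewrite yS; case: (nxtP (y n).+1).
have ygap : forall n, y n.+1 <= y n + K.+1.
  by move=> n; rewrite yS; case: (nxtP (y n).+1) => _ _ h _; rewrite addnS.
have yinc : forall i d, y i + d <= y (i + d).
  move=> i; elim=> [|d IH]; first by rewrite !addn0.
  by rewrite addnS; apply: leq_ltn_trans IH _; rewrite addnS ylt.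
have ycnt : forall i d, count B (iota (y i) (y (i + d) - y i)) = d.
  move=> i; elim=> [|d IH]; first by rewrite addn0 subnn.
  have h1 := yinc i d; have h2 := ylt (i + d).
  have -> : y (i + d.+1) - y i = (y (i + d) - y i) + (y (i+d).+1 - y (i + d)).
    rewrite addnS; lia.
  rewrite iotaD count_cat IH subnKC; last by apply: leq_trans h1; apply: leq_addr.
  rewrite cnt1 ?addn1 // => t ht1 ht2.
  case: (nxtP (y (i + d)).+1) => _ _ _ hm; apply: hm => //.
clearbody y.
have [i [j [k [/andP [hij hjk] hikj hx]]]] :
    seq_has_double_3AP (fun n => (y n).+1).
  apply: Hyp; first by split => // n; rewrite ltnS ylt.
  exists K.+1 => n /=; move: (ygap n); rewrite subSS leq_subLR; by [].
move: hx => /= hx.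
have h0 := yinc i (j - i); rewrite subnKC in h0; last exact: ltnW hij.
have h1 := yinc j (k - j); rewrite subnKC in h1; last exact: ltnW hjk.
have yij : y i < y j by apply: ar1 hij h0.
have yjk : y j < y k by apply: ar1 hjk h1.
exists (y i), (y j), (y k); split; first by split; rewrite ?yB.
split; first by apply: ar2.
have c1 := ycnt i (j - i); have c2 := ycnt j (k - j).
rewrite subnKC in c1; last exact: ltnW hij.
rewrite subnKC in c2; last exact: ltnW hjk.
rewrite c1 c2; exact: ar3.
Qed.

Lemma shift_cnt (A A' : pred nat) n a k :
  (forall t, a <= t < a + k -> A (n + t) = A' t) ->
  count A (iota (n + a) k) = count A' (iota a k).
Proof.
move=> h; rewrite iotaDl count_map; apply: eq_in_count => t.
by rewrite mem_iota => ht; apply: h.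
Qed.

Lemma mainP (Hyp : forall x : nat -> nat, pos_increasing x -> bounded_gaps x -> seq_has_double_3AP x)
  r : forall c : nat -> nat, (forall n, c n < r) ->
  exists col, col < r /\ DAP (fun t => c t == col).
Proof.
elim: r => [|r IH] c hc; first by have := hc 0.
case: (classic (exists K, forall n, exists m, n <= m <= n + K /\ (c m == r))) => [[K hK]|hn].
  by exists r; split => //; apply: (syndetic_case Hyp hK).
have hK : forall K, exists n, forall m, m <= K -> c (n + m) < r.
  move=> K; apply: NNPP => h1; apply: hn; exists K => n.
  apply: NNPP => h2; apply: h1; exists n => m hm.
  have : c (n + m) != r.
    apply/negP => /eqP he; apply: h2; exists (n + m); rewrite he eqxx leq_addr leq_add2l hm; done.
  by have := hc (n + m); rewrite ltnS leq_eqVlt => /orP [->|].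
have [c' [hc' hN]] := compact hK.
have [col [hcol [a [b [e [[ha hb he hab hbe] [hsum hcnt]]]]]]] := IH c' hc'.
have [n hn'] := hN e.+1.
exists col; split; first exact: ltnW.
have hw : forall t, t <= e -> (c (n + t) == col) = (c' t == col).
  by move=> t ht; rewrite hn'.
exists (n + a), (n + b), (n + e); split; first split.
- by rewrite hw // ltnW // (ltn_trans hab hbe).
- by rewrite hw // ltnW.
- by rewrite hw.
- by rewrite ltn_add2l.
- by rewrite ltn_add2l.
split; first lia.
rewrite !subnDl (shift_cnt (A' := fun t => c' t == col)); last first.
  move=> t /andP [_ ht]; apply: hw; lia.
rewrite (shift_cnt (A' := fun t => c' t == col)) //.
move=> t /andP [_ ht]; apply: hw; lia.
Qed.

Lemma rank_split (A : pred nat) a b : a <= b ->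
  rank A b = rank A a + count A (iota a (b - a)).
Proof. by move=> h; rewrite /rank -count_cat -{2}(add0n a) -iotaD subnKC. Qed.

Lemma fin_arith ra rb re X : rb = ra + X -> re = rb + X -> ra + re = 2 * rb.
Proof. lia. Qed.

Theorem proposition1 :
  (forall x : nat -> nat, pos_increasing x -> bounded_gaps x -> seq_has_double_3AP x) ->
  forall (r : nat), 0 < r -> forall c : nat -> 'I_r,
    exists col : 'I_r, set_has_double_3AP (color_class c col).
Proof.
move=> Hyp r hr c.
have [col [hcol [a [b [e [[ha hb he hab hbe] [hsum hcnt]]]]]]] :=
  mainP Hyp (c := fun n => nat_of_ord (c n.+1)) (fun n => ltn_ord _).
exists (Ordinal hcol).
set A := color_class c (Ordinal hcol).
have hA : forall t, A (1 + t) = (nat_of_ord (c t.+1) == col) by [].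
have hsh : forall x k, count A (iota x.+1 k) = count (fun t => nat_of_ord (c t.+1) == col) (iota x k).
  by move=> x k; rewrite -add1n; apply: shift_cnt => t _; rewrite hA.
exists a.+1, b.+1, e.+1; split; first by split => //; rewrite !ltnS hab hbe.
split; last lia.
apply: (@fin_arith _ _ _ (count A (iota a.+1 (b - a)))).
  by rewrite (@rank_split A a.+1 b.+1) // ltnS ltnW.
rewrite (@rank_split A b.+1 e.+1); last by rewrite ltnS ltnW. congr (_ + _); rewrite !hsh; symmetry; exact: hcnt.
Qed.
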